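(* Consider the modified Ghaffari process described in the context, with marking decisions in each phase that are only pairwise independent. If phase $t$ is a type-2 golden phase for an undecided node $v$, i.e., $d_t(v)>1/4$ and $\sum_{u\in N(v),\, u \text{ light}} p_t(u)\ge d_t(v)/10$, then $v$ is removed in phase $t$ (i.e., $v$ or one of its undecided neighbors joins the independent set) with probability at least $1/160$.
   Context: Let $G=(V,E)$ be an undirected graph. The process runs in phases $t=0,1,2,\dots$ on the graph induced by the undecided nodes (initially all nodes); $N(v)$ denotes the set of undecided neighbors of $v$. Each undecided node $v$ has a value $p_t(v)$, with $p_0(v)=1/4$; its effective degree is $d_t(v)=\sum_{u\in N(v)}p_t(u)$. Then $p_{t+1}(v)=p_t(v)/2$ if $d_t(v)\ge 1/2$, and $p_{t+1}(v)=\min\{2p_t(v),1/4\}$ if $d_t(v)<1/2$. A node $u$ is light in phase $t$ if $d_t(u)<1/4$. In phase $t$, each undecided node $v$ becomes marked with probability $p_t(v)$, where the marking events of the nodes in phase $t$ are pairwise independent (given the state at the start of the phase); a marked node none of whose undecided neighbors is marked joins the independent set, and it and all its neighbors are removed. *)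

(* Defs.v *)
From HB Require Import structures.
From mathcomp Require Import all_boot all_order all_algebra.
From mathcomp Require Import all_classical all_reals all_analysis.
Set Implicit Arguments. Unset Strict Implicit. Unset Printing Implicit Defensive.
Import Order.TTheory GRing.Theory Num.Theory.
Local Open Scope ring_scope.

Section Ghaffari.
Variables (R : realType) (T : finType) (e : rel T).

Definition simple_graph := symmetric e /\ irreflexive e.

Definition eff_deg (U : {set T}) (p : T -> R) (v : T) : R :=
  \sum_(u in U | e v u) p u.

Definition light (U : {set T}) (p : T -> R) (u : T) : bool :=
  eff_deg U p u < 1/4.

Definition update (U : {set T}) (p : T -> R) : T -> R :=
  fun v => if 1/2 <= eff_deg U p v then p v / 2 else Num.min (2 * p v) (1/4).

Definition remove_join (U I : {set T}) : {set T} :=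
  U :\: (I :|: [set y | [exists x in I, e x y]]).

(* reachable t U p : (U, p) is a possible state (undecided set, values p_t)
   of the process at the start of phase t *)
Inductive reachable : nat -> {set T} -> (T -> R) -> Prop :=
| reach0 : reachable 0 [set: T] (fun _ => 1/4)
| reachS t U p (I : {set T}) :
    reachable t U p -> I \subset U ->
    (forall x y, x \in I -> y \in I -> ~~ e x y) ->
    reachable t.+1 (remove_join U I) (update U p).

Definition golden2 (U : {set T}) (p : T -> R) (v : T) : Prop :=
  1/4 < eff_deg U p v /\
  eff_deg U p v / 10 <= \sum_(u in U | e v u && light U p u) p u.

Local Open Scope classical_set_scope.

(* In the phase outcome omega, node u joins the independent set:
   u is marked and none of its undecided neighbours is marked. *)
Definition joins {Omega : Type} (U : {set T}) (M : T -> set Omega) (u : T)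
  : set Omega :=
  [set w | M u w /\ (forall x, x \in U -> e u x -> ~ M x w)].

Definition removed {Omega : Type} (U : {set T}) (M : T -> set Omega) (v : T)
  : set Omega :=
  [set w | exists u, [/\ u \in U, u = v \/ e v u & joins U M u w]].

End Ghaffari.

(* Main.v *)
Require Import Defs.
From HB Require Import structures.
From mathcomp Require Import all_boot all_order all_algebra.
From mathcomp Require Import all_classical all_reals all_analysis.
From mathcomp Require Import lra.
Import Order.TTheory GRing.Theory Num.Theory.
Local Open Scope classical_set_scope.
Local Open Scope ring_scope.

Section Helpers.
Context {d : measure_display} {X : measurableType d} {R : realType}
  (mu : {measure set X -> \bar R}).

Lemma boole_seq (I : Type) (r : seq I) (Pr : pred I) (F : I -> set X) :
  (forall i, Pr i -> measurable (F i)) ->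
  (mu (\big[setU/set0]_(i <- r | Pr i) F i) <= \sum_(i <- r | Pr i) mu (F i))%E.
Proof.
move=> mF; elim: r => [|i r IH]; first by rewrite !big_nil measure0.
rewrite !big_cons; case: ifP => Pi //.
apply: le_trans (measureU2 mu (mF i Pi) (bigsetU_measurable r mF)) _.
exact: leeD2l.
Qed.

Lemma in_bigsetU (I : eqType) (r : seq I) (Pr : pred I) (F : I -> set X) x :
  (\big[setU/set0]_(i <- r | Pr i) F i) x -> exists i, [/\ i \in r, Pr i & F i x].
Proof.
elim: r => [|i r IH]; first by rewrite big_nil.
rewrite big_cons; case: ifP => Pi.
  case=> [Fx|/IH [j [jr Pj Fj]]]; first by exists i; rewrite mem_head.
  by exists j; rewrite in_cons jr orbT.
by move=> /IH [j [jr Pj Fj]]; exists j; rewrite in_cons jr orbT.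
Qed.

Lemma bigsetU_in (I : eqType) (r : seq I) (Pr : pred I) (F : I -> set X) i x :
  i \in r -> Pr i -> F i x -> (\big[setU/set0]_(i <- r | Pr i) F i) x.
Proof.
elim: r => [|j r IH] //; rewrite in_cons big_cons => /orP [/eqP <-|ir] Pi Fx.
  by rewrite Pi; left.
case: ifP => _; last exact: IH.
by right; apply: IH.
Qed.

Lemma add_seq (I : eqType) (r : seq I) (Pr : pred I) (F : I -> set X) :
  uniq r -> (forall i, Pr i -> measurable (F i)) ->
  (forall i j, Pr i -> Pr j -> i != j -> F i `&` F j = set0) ->
  mu (\big[setU/set0]_(i <- r | Pr i) F i) = (\sum_(i <- r | Pr i) mu (F i))%E.
Proof.
move=> + mF dis; elim: r => [|i r IH]; first by rewrite !big_nil measure0.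
rewrite /= => /andP [ir ur]; rewrite !big_cons; case: ifP => Pi; last exact: IH.
rewrite (measureU mu (mF i Pi) (bigsetU_measurable r mF)); first by congr (_ + _); exact: (IH ur).
rewrite -subset0 => x [Fx /in_bigsetU [j [jr Pj Fj]]].
have ij : i != j.
  by apply/eqP => eij; move: ir; rewrite eij jr.
by have := dis i j Pi Pj ij; rewrite -subset0 => /(_ x); apply.
Qed.

Lemma setI_bigsetU (I : Type) (A : set X) (r : seq I) (Pr : pred I) (F : I -> set X) :
  A `&` \big[setU/set0]_(i <- r | Pr i) F i = \big[setU/set0]_(i <- r | Pr i) (A `&` F i).
Proof.
elim: r => [|i r IH]; first by rewrite !big_nil setI0.
by rewrite !big_cons; case: ifP => _ //; rewrite setIUr IH.
Qed.

End Helpers.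

Lemma reach_bounds {R : realType} {T : finType} {e : rel T} {t U} {p : T -> R} :
  reachable e t U p -> forall x, 0 <= p x <= 1/4.
Proof.
elim=> [|t' U' p' I _ IH _ _] x; first by lra.
have := IH x; rewrite /update; case: ifP => _ hx.
  by lra.
apply/andP; split.
  by rewrite le_min; apply/andP; split; lra.
by rewrite ge_min lexx orbT.
Qed.

Lemma select (R : realType) (T : finType) (p : T -> R) (X : {set T}) :
  (forall x, 0 <= p x <= 1/4) ->
  exists2 S : {set T}, S \subset X &
    \sum_(u in S) p u <= 11/40 /\
    (1/40 <= \sum_(u in S) p u \/ \sum_(u in S) p u = \sum_(u in X) p u).
Proof.
move=> hp; move: {2}#|X| (erefl #|X|) => n; elim: n X => [|n IH] X hX.
  exists (@finset.set0 T); first exact: finset.sub0set.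
  by rewrite (cards0_eq hX) big_set0; split; [lra|right].
have [x xX] : exists x, x \in X by apply/card_gt0P; rewrite hX.
have hX' : #|X :\ x| = n by move: hX; rewrite (cardsD1 x) xX add1n => -[].
have [S SX' [Sle Sor]] := IH _ hX'.
have SX : S \subset X := fintype.subset_trans SX' (subD1set X x).
have [ge|lt] := lerP (1/40) (\sum_(u in S) p u).
  by exists S => //; split => //; left.
have eqS : \sum_(u in S) p u = \sum_(u in X :\ x) p u.
  by case: Sor => // h; lra.
have xS : x \notin S.
  by apply/negP => /(fintype.subsetP SX'); rewrite !inE eqxx.
exists (x |: S).
  by rewrite finset.subUset finset.sub1set xX SX.
have hsum : \sum_(u in X) p u = p x + \sum_(u in X :\ x) p u := big_setD1 _ xX.
rewrite big_setU1 //= eqS -hsum; split.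
  by have := hp x; lra.
by have [h|h] := lerP (1/40) (\sum_(u in X) p u); [left|right].
Qed.

Theorem lemma4 (R : realType) (T : finType) (e : rel T)
  (t : nat) (U : {set T}) (p : T -> R) (v : T)
  (d : measure_display) (Omega : measurableType d)
  (P : probability Omega R) (M : T -> set Omega) :
  simple_graph e ->
  reachable e t U p ->
  v \in U ->
  golden2 e U p v ->
  (forall u, u \in U -> measurable (M u)) ->
  (forall u, u \in U -> P (M u) = (p u)%:E) ->
  (forall u w, u \in U -> w \in U -> u != w ->
     (P (M u `&` M w) = P (M u) * P (M w))%E) ->
  ((1 / 160 : R)%:E <= P (removed e U M v))%E.
Proof.
move=> [esym eirr] reach vU [dgt dle] mM PM indep.
have hp := reach_bounds reach.
pose L := [set u in U | e v u && light e U p u].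
have [S SL [Sle Sor]] := @select _ _ p L hp.
have SU : forall u, u \in S -> [/\ u \in U, e v u & light e U p u].
  move=> u /(fintype.subsetP SL); rewrite !inE => /andP [-> /andP [-> ->]].
  by [].
have sumL : \sum_(u in L) p u = \sum_(u in U | e v u && light e U p u) p u.
  by apply: eq_bigl => u; rewrite !inE.
have Sge : 1/40 <= \sum_(u in S) p u.
  case: Sor => // ->; rewrite sumL; move: dgt dle; rewrite /eff_deg; lra.
pose Q u w := (w \in U) && (w != u) && (e u w || (w \in S)).
pose B u := \big[setU/set0]_(w <- index_enum T | Q u w) M w.
pose A u := M u `\` B u.
have mB : forall u, measurable (B u).
  move=> u; apply: bigsetU_measurable => w /andP [/andP [wU _] _]; exact: mM.
have mA : forall u, u \in U -> measurable (A u).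
  by move=> u uU; apply: measurableD; [exact: mM|exact: mB].
have hA : forall u, u \in S -> ((p u * (19/40))%:E <= P (A u))%E.
  move=> u uS; have [uU evu lu] := SU u uS.
  have eq1 := measureDI P (mM u uU) (mB u).
  have le1 : (P (M u `&` B u) <= (p u * \sum_(w <- index_enum T | Q u w) p w)%:E)%E.
    rewrite /B setI_bigsetU.
    have h : forall w, Q u w -> measurable (M u `&` M w).
      by move=> w /andP [/andP [wU _] _]; apply: measurableI; exact: mM.
    have := boole_seq P T (index_enum T) (Q u) (fun w => M u `&` M w) h.
    move/le_trans; apply.
    rewrite mulr_sumr -sumEFin; apply: lee_sum => w /andP [/andP [wU wu] _].
    have h2 : P (M u `&` M w) = (p u * p w)%:E.
      by rewrite indep // 1?eq_sym // !PM // EFinM.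
    have := lexx ((p u * p w)%:E); rewrite -{1}h2; exact.
  have sW : \sum_(w <- index_enum T | Q u w) p w <= 21/40.
    have h1 : \sum_(w <- index_enum T | Q u w) p w <=
        \sum_(w in U | e u w) p w + \sum_(w in U | w \in S) p w.
      rewrite [X in X <= _]big_mkcond [X in _ <= X + _]big_mkcond.
      rewrite [X in _ <= _ + X]big_mkcond -big_split /=; apply: ler_sum => w _.
      have := hp w; rewrite /Q; case: (w \in U); case: (w != u); case: (e u w);
        case: (w \in S) => /= /andP [hw1 hw2]; lra.
    have h2 : \sum_(w in U | w \in S) p w = \sum_(w in S) p w.
      apply: eq_bigl => w; case wS: (w \in S); rewrite ?andbF ?andbT //.
      by have [] := SU w wS.
    move: lu; rewrite /light /eff_deg => lu; lra.
  have finA : P (A u) = (fine (P (A u)))%:E.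
    by rewrite fineK //; apply: fin_num_measure; exact: mA.
  have finB : P (M u `&` B u) = (fine (P (M u `&` B u)))%:E.
    by rewrite fineK //; apply: fin_num_measure; apply: measurableI; [exact: mM|exact: mB].
  have e1 : (p u)%:E = ((fine (P (A u))) + (fine (P (M u `&` B u))))%:E.
    by rewrite EFinD -PM // -finA -finB; exact: eq1.
  have l1 : fine (P (M u `&` B u)) <= p u * \sum_(w <- index_enum T | Q u w) p w.
    by rewrite -lee_fin -finB; exact: le1.
  move: e1 => /eqP; rewrite eqe => /eqP e1.
  rewrite finA lee_fin.
  have hpu := hp u; move: hpu => /andP [hu1 hu2].
  have : 0 <= p u * (21/40 - \sum_(w <- index_enum T | Q u w) p w).
    by apply: mulr_ge0 => //; lra.
  rewrite mulrBr; lra.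
have mRem : removed e U M v = \big[setU/set0]_(u <- index_enum T |
      (u \in U) && ((u == v) || e v u))
      (M u `\` \big[setU/set0]_(x <- index_enum T | (x \in U) && e u x) M x).
  rewrite /removed /joins eqEsubset; split.
  - move=> w [u [uU uv [Mu nM]]].
    apply: (@bigsetU_in _ _ T (index_enum T) _ _ u); first exact: mem_index_enum.
      by rewrite uU; case: uv => [->|->]; rewrite ?eqxx ?orbT.
    split => // /in_bigsetU [x [_ /andP [xU eux] Mx]]; exact: nM x xU eux Mx.
  - move=> w /in_bigsetU [u [_ /andP [uU uv] [Mu nB]]]; exists u; split => //.
      by case/orP: uv => [/eqP ->|]; [left|right].
    split => // x xU eux Mx; apply: nB.
    apply: (@bigsetU_in _ _ T (index_enum T) _ _ x); first exact: mem_index_enum.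
      by rewrite xU eux.
    exact: Mx.
have mR : measurable (removed e U M v).
  rewrite mRem; apply: bigsetU_measurable => u /andP [uU _].
  apply: measurableD; first exact: mM.
  by apply: bigsetU_measurable => x /andP [xU _]; exact: mM.
have sub : \big[setU/set0]_(u <- index_enum T | u \in S) A u `<=` removed e U M v.
  move=> x /in_bigsetU [u [_ uS [Mux nBx]]]; have [uU evu _] := SU u uS.
  exists u; split => //; first by right.
  split => // y yU euy Myx; apply: nBx.
  apply: (@bigsetU_in _ _ T (index_enum T) _ _ y); first exact: mem_index_enum.
    rewrite /Q yU euy /= andbT; apply/eqP => yu; move: euy; rewrite yu.
    by rewrite eirr.
  exact: Myx.
have disj : forall u u', u \in S -> u' \in S -> u != u' -> A u `&` A u' = set0.
  move=> u u' uS u'S uu'; rewrite -subset0 => x [[Mux _] [_ nB]]; apply: nB.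
  apply: (@bigsetU_in _ _ T (index_enum T) _ _ u); first exact: mem_index_enum.
    by have [uU _ _] := SU u uS; rewrite /Q uU uS uu' orbT.
  exact: Mux.
have mAS : forall u, u \in S -> measurable (A u).
  by move=> u uS; have [uU _ _] := SU u uS; exact: mA.
have eqS := add_seq P T (index_enum T) (fun u => u \in S) A (index_enum_uniq T) mAS disj.
have mbig : measurable (\big[setU/set0]_(u <- index_enum T | u \in S) A u).
  exact: bigsetU_measurable.
have step1 := le_measure P (_ : _ \in measurable) (_ : _ \in measurable) sub.
have step2 : (\sum_(u <- index_enum T | u \in S) P (A u) <=
   P (\big[setU/set0]_(u <- index_enum T | u \in S) A u))%E.
  by rewrite le_eqVlt; apply/orP; left; apply/eqP; symmetry; exact: eqS.
have step3 : (\sum_(u <- index_enum T | u \in S) (p u * (19/40))%:E <=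
   \sum_(u <- index_enum T | u \in S) P (A u))%E.
  exact: lee_sum.
apply: le_trans (step1 _ _); last by rewrite inE.
  apply: le_trans step2; apply: le_trans step3.
  rewrite sumEFin -mulr_suml lee_fin; lra.
by rewrite inE.
Qed.
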